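(* Let $G$ be an $n\times n$ bimatrix game with payoff matrices $R,C\in[0,1]^{n\times n}$, and let $\epsilon,\Delta\ge 0$. Then $G$ satisfies the well-supported $(2\epsilon,\Delta)$-approximation stability condition if and only if $G$ satisfies the $(\epsilon,\Delta)$-stability to perturbations condition.
   Context: The row player receives $R_{i,j}$ and the column player $C_{i,j}$ when row plays $i$ and column plays $j$. Mixed strategies $p,q$ are probability vectors in $\mathbb{R}^n$; payoffs are $p^TRq$ and $p^TCq$; $e_i$ denotes the $i$-th unit vector; $\mathrm{supp}(p)=\{i:p_i>0\}$. $(p,q)$ is a Nash equilibrium if $e_i^TRq\le p^TRq$ and $p^TCe_j\le p^TCq$ for all $i,j$. $(p,q)$ is a well-supported $\epsilon$-equilibrium if for every $i\in\mathrm{supp}(p)$ and every $j$, $e_i^TRq\ge e_j^TRq-\epsilon$, and for every $i\in\mathrm{supp}(q)$ and every $j$, $p^TCe_i\ge p^TCe_j-\epsilon$. The distance is $d(p,p')=\frac12\sum_i|p_i-p'_i|$ and $d((p,q),(p',q'))=\max(d(p,p'),d(q,q'))$; $(p,q)$ is $\Delta$-close to $(p',q')$ if this distance is at most $\Delta$. A game $G'$ with matrices $R',C'$ is an $L_\infty$ $\alpha$-perturbation of $G$ if $|R_{i,j}-R'_{i,j}|\le\alpha$ and $|C_{i,j}-C'_{i,j}|\le\alpha$ for all $i,j$ (entries of $G'$ need not lie in $[0,1]$). $G$ satisfies the $(\epsilon,\Delta)$-stability to perturbations condition if for every $L_\infty$ $\epsilon$-perturbation $G'$ of $G$ and every Nash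 equilibrium $(p,q)$ of $G'$ there is a Nash equilibrium of $G$ that is $\Delta$-close to $(p,q)$. $G$ satisfies the well-supported $(\epsilon,\Delta)$-approximation stability condition if every well-supported $\epsilon$-equilibrium of $G$ is $\Delta$-close to some Nash equilibrium of $G$. *)

(* Defs.v *)
From mathcomp Require Import all_boot all_order all_algebra.
From mathcomp Require Import reals.
Set Implicit Arguments. Unset Strict Implicit. Unset Printing Implicit Defensive.
Import Order.TTheory GRing.Theory Num.Theory.
Local Open Scope ring_scope.

Section Games.
Variables (R : realType) (n : nat).

Definition mixed (p : 'I_n -> R) : Prop :=
  (forall i, 0 <= p i) /\ \sum_(i < n) p i = 1.

Definition bil (p : 'I_n -> R) (A : 'M[R]_n) (q : 'I_n -> R) : R :=
  \sum_(i < n) \sum_(j < n) p i * A i j * q j.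

Definition rowpay (A : 'M[R]_n) (i : 'I_n) (q : 'I_n -> R) : R :=
  \sum_(j < n) A i j * q j.

Definition colpay (p : 'I_n -> R) (A : 'M[R]_n) (j : 'I_n) : R :=
  \sum_(i < n) p i * A i j.

Definition is_NE (Rm Cm : 'M[R]_n) (p q : 'I_n -> R) : Prop :=
  mixed p /\ mixed q /\
  (forall i, rowpay Rm i q <= bil p Rm q) /\
  (forall j, colpay p Cm j <= bil p Cm q).

Definition is_WSNE (eps : R) (Rm Cm : 'M[R]_n) (p q : 'I_n -> R) : Prop :=
  mixed p /\ mixed q /\
  (forall i j, 0 < p i -> rowpay Rm j q - eps <= rowpay Rm i q) /\
  (forall i j, 0 < q i -> colpay p Cm j - eps <= colpay p Cm i).

Definition dist (p p' : 'I_n -> R) : R :=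
  2^-1 * \sum_(i < n) `|p i - p' i|.

Definition close (Delta : R) (p q p' q' : 'I_n -> R) : Prop :=
  Num.max (dist p p') (dist q q') <= Delta.

Definition perturbation (alpha : R) (Rm Cm Rm' Cm' : 'M[R]_n) : Prop :=
  forall i j, `|Rm i j - Rm' i j| <= alpha /\ `|Cm i j - Cm' i j| <= alpha.

Definition stable_to_perturbations (eps Delta : R) (Rm Cm : 'M[R]_n) : Prop :=
  forall Rm' Cm' : 'M[R]_n, perturbation eps Rm Cm Rm' Cm' ->
  forall p q, is_NE Rm' Cm' p q ->
  exists p' q', is_NE Rm Cm p' q' /\ close Delta p q p' q'.

Definition ws_approx_stable (eps Delta : R) (Rm Cm : 'M[R]_n) : Prop :=
  forall p q, is_WSNE eps Rm Cm p q ->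
  exists p' q', is_NE Rm Cm p' q' /\ close Delta p q p' q'.

Definition in01 (A : 'M[R]_n) : Prop := forall i j, 0 <= A i j <= 1.

End Games.

(* Main.v *)
Require Import Defs.
From mathcomp Require Import all_boot all_order all_algebra.
From mathcomp Require Import reals.
From mathcomp Require Import lra.
Import Order.TTheory GRing.Theory Num.Theory.
Local Open Scope ring_scope.

Section Aux.
Variables (R : realType) (n : nat).
Implicit Types (p q r : 'I_n -> R).

Lemma wavg_shift p (f : 'I_n -> R) c : mixed p ->
  \sum_k p k * (f k + c) = \sum_k p k * f k + c.
Proof.
move=> [_ p1]; rewrite (eq_bigr (fun k => p k * f k + p k * c)).
  by rewrite big_split /= -mulr_suml p1 mul1r.
by move=> k _; rewrite mulrDr.
Qed.

Lemma wavg_support p r : mixed p -> (forall i, r i <= \sum_k p k * r k) ->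
  forall i, 0 < p i -> r i = \sum_k p k * r k.
Proof.
move=> [p0 p1] hr i pi.
set s := \sum_k p k * r k in hr *.
have h0 : \sum_k p k * (s - r k) = 0.
  rewrite (eq_bigr (fun k => p k * s - p k * r k)); last by move=> k _; rewrite mulrBr.
  by rewrite sumrB -mulr_suml p1 mul1r subrr.
have hge : forall k, true -> 0 <= p k * (s - r k).
  by move=> k _; rewrite mulr_ge0 // subr_ge0.
have /eqP := psumr_eq0P hge h0 isT (i := i); rewrite mulf_eq0 (gt_eqF pi) /= subr_eq0.
by move/eqP.
Qed.

Lemma wavg_ws p r r' (e : R) : mixed p -> (forall i, `|r i - r' i| <= e) ->
  (forall i, r' i <= \sum_k p k * r' k) ->
  forall i j, 0 < p i -> r j - 2 * e <= r i.
Proof.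
move=> mp hd hr i j pi.
have hs := wavg_support p r' mp hr i pi.
have h1 := hd i; have h2 := hd j.
have hj := hr j. rewrite -hs in hj.
move: h1 h2; rewrite !ler_norml => /andP[a1 a2] /andP[b1 b2].
lra.
Qed.

Lemma wavg_construct p r (e : R) (i0 : 'I_n) : 0 <= e -> mixed p -> 0 < p i0 ->
  (forall i j, 0 < p i -> r j - 2 * e <= r i) ->
  exists c : 'I_n -> R, (forall i, `|c i| <= e) /\
     forall i, r i + c i <= \sum_k p k * (r k + c k).
Proof.
move=> e0 mp pi0 hws.
pose m := \big[Num.max/r i0]_k r k.
have rm : forall k, r k <= m by move=> k; apply: le_bigmax.
have mr : forall i, 0 < p i -> m <= r i + 2 * e.
  move=> i pi; apply: bigmax_le => [|k _]; [have := hws i i0 pi | have := hws i k pi]; lra.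
exists (fun i => if 0 < p i then m - e - r i else - e); split.
  move=> i; case: ifP => pi.
    rewrite ler_norml; have := rm i; have := mr i pi; lra.
  by rewrite normrN ger0_norm.
have hsum : \sum_k p k * (r k + (if 0 < p k then m - e - r k else - e)) = m - e.
  rewrite (eq_bigr (fun k => p k * (m - e))).
    by rewrite -mulr_suml mp.2 mul1r.
  move=> k _; case: ifP => pk; first by congr (_ * _); lra.
  have : p k = 0.
    by apply/eqP; rewrite eq_le mp.1 andbT leNgt pk.
  by move=> ->; rewrite !mul0r.
move=> i; rewrite hsum; case: ifP => _; first lra.
have := rm i; lra.
Qed.

Lemma exists_pos p : mixed p -> exists i, 0 < p i.
Proof.
move=> [p0 p1]; case: (boolP [exists i, 0 < p i]) => [/existsP//|/existsPn h].
have : \sum_i p i <= 0.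
  by apply: sumr_le0 => i _; rewrite leNgt (negbTE (h i)).
by rewrite p1; lra.
Qed.

Lemma bil_row p (A : 'M[R]_n) q : bil p A q = \sum_i p i * rowpay A i q.
Proof.
by rewrite /bil; apply: eq_bigr => i _; rewrite mulr_sumr; apply: eq_bigr => j _; rewrite mulrA.
Qed.

Lemma bil_col p (A : 'M[R]_n) q : bil p A q = \sum_j q j * colpay p A j.
Proof.
rewrite /bil exchange_big; apply: eq_bigr => j _; rewrite mulr_sumr.
by apply: eq_bigr => i _; rewrite mulrC.
Qed.

Lemma rowpay_shift (A : 'M[R]_n) (c : 'I_n -> R) i q : mixed q ->
  rowpay (\matrix_(i, j) (A i j + c i)) i q = rowpay A i q + c i.
Proof.
move=> mq; rewrite /rowpay.
rewrite (eq_bigr (fun j => q j * (A i j + c i))); last by move=> j _; rewrite mxE mulrC.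
rewrite wavg_shift //; congr (_ + _); apply: eq_bigr => j _; exact: mulrC.
Qed.

Lemma colpay_shift (A : 'M[R]_n) (c : 'I_n -> R) j p : mixed p ->
  colpay p (\matrix_(i, j) (A i j + c j)) j = colpay p A j + c j.
Proof.
move=> mp; rewrite /colpay.
rewrite (eq_bigr (fun i => p i * (A i j + c j))); last by move=> i _; rewrite mxE.
by rewrite wavg_shift.
Qed.

Lemma norm_wavg q (f : 'I_n -> R) (e : R) : mixed q -> (forall j, `|f j| <= e) ->
  `|\sum_j f j * q j| <= e.
Proof.
move=> [q0 q1] hf; apply: le_trans (ler_norm_sum _ _ _) _.
apply: le_trans (_ : \sum_j e * q j <= e).
  by apply: ler_sum => j _; rewrite normrM (ger0_norm (q0 j)) ler_wpM2r.
by rewrite -mulr_sumr q1 mulr1.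
Qed.

Lemma rowpay_close (A B : 'M[R]_n) (e : R) q : mixed q -> (forall i j, `|A i j - B i j| <= e) ->
  forall i, `|rowpay A i q - rowpay B i q| <= e.
Proof.
move=> mq h i; rewrite /rowpay -sumrB.
rewrite (eq_bigr (fun j => (A i j - B i j) * q j)); last by move=> j _; rewrite mulrBl.
exact: norm_wavg.
Qed.

Lemma colpay_close (A B : 'M[R]_n) (e : R) p : mixed p -> (forall i j, `|A i j - B i j| <= e) ->
  forall j, `|colpay p A j - colpay p B j| <= e.
Proof.
move=> mp h j; rewrite /colpay -sumrB.
rewrite (eq_bigr (fun i => (A i j - B i j) * p i)); last by move=> i _; rewrite mulrBl mulrC [B i j * _]mulrC.
exact: norm_wavg.
Qed.

End Aux.

Theorem theorem1 (R : realType) (n : nat) (Rm Cm : 'M[R]_n) (eps Delta : R) :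
  in01 Rm -> in01 Cm -> 0 <= eps -> 0 <= Delta ->
  (ws_approx_stable (2 * eps) Delta Rm Cm <-> stable_to_perturbations eps Delta Rm Cm).
Proof.
move=> _ _ e0 _; split.
  move=> ws Rm' Cm' hp p q [mp [mq [hr hc]]]; apply: ws.
  split; first done; split; first done; split.
    move=> i j pi.
    have H :=  (wavg_ws R n p (fun i => rowpay Rm i q) (fun i => rowpay Rm' i q) eps mp).
    apply: (H _ _ i j pi).
      by apply: rowpay_close => // i1 j1; have [] := hp i1 j1.
    by move=> i1; rewrite -bil_row.
  move=> i j qi.
  have H :=  (wavg_ws R n q (fun i => colpay p Cm i) (fun i => colpay p Cm' i) eps mq).
  apply: (H _ _ i j qi).
    by apply: colpay_close => // i1 j1; have [] := hp i1 j1.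
  by move=> i1; rewrite -bil_col.
move=> sp p q [mp [mq [hr hc]]].
have [i0 pi0] := exists_pos R n p mp.
have [j0 qj0] := exists_pos R n q mq.
have [c [hc1 hc2]] := wavg_construct R n p (fun i => rowpay Rm i q) eps i0 e0 mp pi0 hr.
have [d [hd1 hd2]] := wavg_construct R n q (fun j => colpay p Cm j) eps j0 e0 mq qj0 hc.
apply: (sp (\matrix_(i, j) (Rm i j + c i)) (\matrix_(i, j) (Cm i j + d j))).
  move=> i j; rewrite !mxE; split.
    by rewrite opprD addrA subrr add0r normrN.
  by rewrite opprD addrA subrr add0r normrN.
split; first done; split; first done; split.
  move=> i; rewrite bil_row !rowpay_shift //.
  apply: le_trans (hc2 i) _; rewrite le_eqVlt; apply/orP; left; apply/eqP.
  by apply: eq_bigr => k _; rewrite rowpay_shift.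
move=> j; rewrite bil_col !colpay_shift //.
apply: le_trans (hd2 j) _; rewrite le_eqVlt; apply/orP; left; apply/eqP.
by apply: eq_bigr => k _; rewrite colpay_shift.
Qed.
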